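(* Let $G$ be a finite simple graph with a vertex $v$ such that $\deg(v)\leq k$, and let $m\ge 1$. Then the $(m-k-1)$-skeleton of $\mathrm{Hom}(G\setminus\{v\},K_m)$ is contained in $\mathrm{Hom}_{\{v\}}(G,K_m)$.
   Context: Graphs are finite, undirected and simple; $K_m$ is the complete graph on $m$ vertices; $G\setminus\{v\}$ is the induced subgraph on $V(G)\setminus\{v\}$. For graphs $G,H$, the homomorphism complex $\mathrm{Hom}(G,H)$ is the polyhedral complex whose cells are functions $\eta:V(G)\to 2^{V(H)}\setminus\{\varnothing\}$ such that whenever $\{x,y\}\in E(G)$ we have $\eta(x)\times\eta(y)\subseteq E(H)$; the cell $\eta$ is a product of simplices of dimension $\sum_{v\in V(G)}(|\eta(v)|-1)$, with $\eta\subseteq\tau$ iff $\eta(v)\subseteq\tau(v)$ for all $v$. For an independent set $I$ of $G$, $\mathrm{Hom}_I(G,H)$ is the subcomplex of $\mathrm{Hom}(G\setminus I,H)$ consisting of all cells $\eta\in\mathrm{Hom}(G\setminus I,H)$ for which there exists a cell $\overline{\eta}\in\mathrm{Hom}(G,H)$ with $\overline{\eta}|_{V(G)\setminus I}=\eta$. *)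

(* Defs.v *)
From mathcomp Require Import all_boot all_order all_algebra.
Set Implicit Arguments. Unset Strict Implicit. Unset Printing Implicit Defensive.

Definition simple_graph (T : finType) (e : rel T) : Prop :=
  symmetric e /\ irreflexive e.

Definition deg (T : finType) (e : rel T) (v : T) : nat := #|[set u | e v u]|.

Definition K (m : nat) : rel 'I_m := fun a b => a != b.

Definition independent (T : finType) (e : rel T) (I : {set T}) : Prop :=
  forall x y, x \in I -> y \in I -> ~~ e x y.

Definition hom_cell (T S : finType) (e : rel T) (eH : rel S) (eta : T -> {set S}) : Prop :=
  (forall x, eta x != set0) /\
  (forall x y, e x y -> forall a b, a \in eta x -> b \in eta y -> eH a b).

Definition cell_dim (T S : finType) (eta : T -> {set S}) : nat :=
  \sum_(x : T) (#|eta x| - 1).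

Notation del_vtx I := {x | x \notin I}.
Definition del_rel (T : finType) (e : rel T) (I : {set T}) : rel (del_vtx I) :=
  fun x y => e (sval x) (sval y).
Arguments del_rel {T} e I.

Definition homI_cell (T S : finType) (e : rel T) (eH : rel S) (I : {set T})
    (eta : del_vtx I -> {set S}) : Prop :=
  hom_cell (del_rel e I) eH eta /\
  exists etab : T -> {set S}, hom_cell e eH etab /\ forall x : del_vtx I, etab (sval x) = eta x.
Arguments homI_cell {T S} e eH I eta.
Arguments hom_cell {T S} e eH eta.

(* Main.v *)
Require Import Defs.
From mathcomp Require Import all_boot all_order all_algebra.
From mathcomp Require Import zify.
Local Open Scope ring_scope.

Theorem lemma3p3 (V : finType) (e : rel V) (v : V) (k m : nat) :
  simple_graph e ->
  (deg e v <= k)%N ->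
  (1 <= m)%N ->
  forall eta : del_vtx [set v] -> {set 'I_m},
    hom_cell (del_rel e [set v]) (@K m) eta ->
    ((cell_dim eta)%:Z <= m%:Z - k%:Z - 1) ->
    homI_cell e (@K m) [set v] eta.
Proof.
move=> [esym eirr] hdeg hm eta [hne hedge] hdim.
have hdim' : (cell_dim eta + k + 1 <= m)%N by lia.
pose P := [pred y : del_vtx [set v] | e v (sval y)].
pose U := \bigcup_(y | P y) eta y.
have hU1 : (#|U| <= \sum_(y | P y) #|eta y|)%N.
  apply: (big_ind2 (fun (A : {set 'I_m}) n => #|A| <= n)%N).
  - by rewrite cards0.
  - move=> A1 n1 A2 n2 h1 h2; apply: leq_trans (leq_card_setU A1 A2) _.
    exact: leq_add.
  - by move=> y _.
have hU2 : (\sum_(y | P y) #|eta y| <= cell_dim eta + #|P|)%N.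
  have hsplit : \sum_(y | P y) #|eta y| = (\sum_(y | P y) (#|eta y| - 1) + \sum_(y | P y) 1)%N.
    rewrite -big_split /=; apply: eq_bigr => y _.
    have : (0 < #|eta y|)%N by rewrite card_gt0 hne.
    move=> h; rewrite subn1 addn1 prednK //.
  have hcd : (\sum_(y | P y) (#|eta y| - 1) <= cell_dim eta)%N.
    rewrite /cell_dim [X in (_ <= X)%N](bigID P) /=; exact: leq_addr.
  rewrite hsplit.
  rewrite sum1_card; exact: leq_add.
have hP : (#|P| <= deg e v)%N.
  rewrite /deg -(card_imset P val_inj).
  apply: subset_leq_card; apply/subsetP => u /imsetP [y Py ->].
  by rewrite inE.
have : (#|U| < m)%N by lia.
move=> hUm.
have : ~: U != set0.
  apply/eqP => h0.
  have := cardsC U; rewrite h0 cards0 card_ord addn0; lia.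
case/set0Pn => c; rewrite inE => hc.
split; first by split.
pose etab (x : V) : {set 'I_m} :=
  match insub x with Some y => eta y | None => [set c] end.
have etabE : forall x : del_vtx [set v], etab (sval x) = eta x.
  by move=> x; rewrite /etab valK.
have etabv : etab v = [set c].
  by rewrite /etab insubN // negbK inE.
have notv : forall x, x != v -> exists y : del_vtx [set v], sval y = x.
  move=> x hx; have hx' : x \notin [set v] by rewrite inE.
  by exists (exist _ x hx').
exists etab; split => //; split.
- move=> x; case: (eqVneq x v) => [->|hx]; first by rewrite etabv; apply/set0Pn; exists c; rewrite inE.
  by have [y <-] := notv x hx; rewrite etabE.
- have key : forall x b, e v x -> b \in etab x -> c != b.
    move=> x b hvx hb.
    have hx : x != v by apply: contraTneq hvx => ->; rewrite eirr.
    have [y hy] := notv x hx; subst x; rewrite etabE in hb.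
    apply: contraNneq hc => ->.
    by apply/bigcupP; exists y.
  move=> x y hxy a b ha hb; rewrite /K.
  case: (eqVneq x v) => [hxv|hx].
    subst x; rewrite etabv inE in ha; rewrite (eqP ha); exact: key hxy hb.
  case: (eqVneq y v) => [hyv|hy].
    subst y; rewrite etabv inE in hb; rewrite (eqP hb) eq_sym.
    by apply: key ha; rewrite esym.
  have [x' hx'] := notv x hx; have [y' hy'] := notv y hy; subst x y.
  rewrite !etabE in ha hb.
  exact: (hedge x' y' hxy a b ha hb).
Qed.
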